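(* Let $G$ be an undirected weighted graph with at least one edge of positive weight. Then $\mathsf{OPT}^{\text{max-min}}(G)=\frac{\mathsf{OPT}_2(G)}{2}$.
   Context: Weighted modularity: $G=(V,E,\ell)$ is an undirected graph with nonnegative edge weights $\ell$; $a_{u,v}=\ell(u,v)$ if $\{u,v\}\in E$ and $0$ otherwise; $d_u=\sum_{v}a_{u,v}$ is the weighted degree, and $m=\frac12\sum_v d_v$. For $C\subseteq V$, $\mathsf M(C)=\frac{1}{2m}\sum_{u\in C}\sum_{v\in C}\big(a_{u,v}-\frac{d_ud_v}{2m}\big)$, the sum over all ordered pairs including $u=v$. A clustering is a partition $\mathcal S$ of $V$ into nonempty clusters. The sum modularity is $\mathsf M(\mathcal S)=\sum_{C\in\mathcal S}\mathsf M(C)$ and $\mathsf{OPT}_2$ is its maximum over clusterings with at most two clusters. The max-min modularity is $\mathsf M^{\text{max-min}}(\mathcal S)=\min_{C\in\mathcal S}\mathsf M(C)$, and $\mathsf{OPT}^{\text{max-min}}$ is its maximum over all clusterings (any number of clusters). *)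

(* Defs.v *)
From HB Require Import structures.
From mathcomp Require Import all_boot all_order all_algebra.
Set Implicit Arguments. Unset Strict Implicit. Unset Printing Implicit Defensive.
Import Order.TTheory GRing.Theory Num.Theory.
Local Open Scope ring_scope.

Section Modularity.
Variables (R : realFieldType) (V : finType) (a : V -> V -> R).

Definition wdeg (u : V) : R := \sum_(v : V) a u v.

Definition wm : R := (\sum_(v : V) wdeg v) / 2%:R.

Definition modC (C : {set V}) : R :=
  (2%:R * wm)^-1 *
  \sum_(u in C) \sum_(v in C) (a u v - wdeg u * wdeg v / (2%:R * wm)).

Definition clustering (P : {set {set V}}) : bool := partition P [set: V].

Definition sum_mod (P : {set {set V}}) : R := \sum_(C in P) modC C.

Definition is_maxmin_val (P : {set {set V}}) (x : R) : Prop :=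
  (exists2 C, C \in P & modC C = x) /\ (forall C, C \in P -> x <= modC C).

Definition is_max (S : R -> Prop) (x : R) : Prop :=
  S x /\ (forall y, S y -> y <= x).

Definition is_OPT_maxmin (x : R) : Prop :=
  is_max (fun y => exists2 P, clustering P & is_maxmin_val P y) x.

Definition is_OPT2 (x : R) : Prop :=
  is_max (fun y => exists2 P, clustering P && (#|P| <= 2)%N & sum_mod P = y) x.

End Modularity.

(* Main.v *)
Require Import Defs.
From HB Require Import structures.
From mathcomp Require Import all_boot all_order all_algebra.
Import Order.TTheory GRing.Theory Num.Theory.
Local Open Scope ring_scope.
Set Implicit Arguments.

Section H.
Variables (R : realFieldType) (V : finType) (a : V -> V -> R).
Hypothesis a_sym : forall u v, a u v = a v u.

Definition S (C B : {set V}) := \sum_(u in C) \sum_(v in B) a u v.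
Definition dg (C : {set V}) := \sum_(u in C) wdeg a u.

Lemma dgS C : dg C = S C setT.
Proof. by apply: eq_bigr => u _; rewrite /wdeg; apply: eq_bigl => v; rewrite in_setT. Qed.

Lemma S_sym C B : S C B = S B C.
Proof. rewrite /S exchange_big /=; apply: eq_bigr => u _; apply: eq_bigr => v _; exact: a_sym. Qed.

Lemma S_splitr C B : S C setT = S C B + S C (~: B).
Proof.
rewrite /S -big_split /=; apply: eq_bigr => u _.
rewrite (bigID (fun v => v \in B)) /=; congr (_ + _); apply: eq_bigl => v;
by rewrite ?in_setT ?in_setC.
Qed.

Lemma Qform (C : {set V}) K : \sum_(u in C) \sum_(v in C) (a u v - wdeg a u * wdeg a v / K)
   = S C C - dg C * dg C / K.
Proof.
rewrite /S /dg.
under eq_bigr => u _ do rewrite sumrB.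
rewrite sumrB; congr (_ - _).
rewrite -mulrA mulr_suml; apply: eq_bigr => u _.
by rewrite mulrA mulr_sumr mulr_suml.
Qed.

Lemma dgT : dg setT = dg setT. Proof. by []. Qed.

Lemma Qcompl C : dg setT != 0 -> S C C - dg C * dg C / dg setT = S (~: C) (~: C) - dg (~: C) * dg (~: C) / dg setT.
Proof.
set D := dg setT => D0.
have hC : S C C = dg C - S C (~: C) by rewrite dgS (S_splitr C C) addrK.
have hC' : S (~: C) (~: C) = dg (~: C) - S C (~: C).
  by rewrite dgS (S_splitr (~: C) C) (S_sym (~: C) C) [S C (~: C) + _]addrC addrK.
have hD : D = dg C + dg (~: C).
  rewrite /D /dg (bigID (fun v => v \in C)) /=; congr (_ + _); apply: eq_bigl => v;
  by rewrite ?in_setT ?in_setC.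
rewrite hC hC'.
suff E : dg C - dg C * dg C / D = dg (~: C) - dg (~: C) * dg (~: C) / D.
  by rewrite -!addrA [- S _ _ + _]addrC [- S C (~:C) + _]addrC !addrA E.
have E1 : dg C * dg C / D - dg (~: C) * dg (~: C) / D = dg C - dg (~: C).
  by rewrite -mulrBl -!expr2 subr_sqr -hD -mulrA divff // mulr1.
have Ex : dg C * dg C / D = dg C - dg (~: C) + dg (~: C) * dg (~: C) / D by rewrite -E1 subrK.
by rewrite Ex opprD addrA subKr.
Qed.

Lemma Keq : 2%:R * wm a = dg setT.
Proof.
rewrite /wm mulrC divfK ?pnatr_eq0 //; rewrite /dg; apply: eq_bigl => v; by rewrite in_setT.
Qed.

Lemma modC_compl C : modC a (~: C) = modC a C.
Proof.
rewrite /modC !Qform Keq.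
have [D0|D0] := eqVneq (dg setT) 0; first by rewrite D0 invr0 !mul0r.
by rewrite (Qcompl C D0).
Qed.

Lemma modT : modC a setT = 0.
Proof.
rewrite /modC Qform Keq -dgS.
have [D0|D0] := eqVneq (dg setT) 0; first by rewrite D0 invr0 !mul0r.
by rewrite mulfK // subrr mulr0.
Qed.

End H.

Theorem lemma12 (R : realFieldType) (V : finType) (a : V -> V -> R)
  (a_sym : forall u v, a u v = a v u)
  (a_nneg : forall u v, 0 <= a u v)
  (a_noloop : forall u, a u u = 0)
  (a_edge : exists u v, 0 < a u v) :
  exists x y, is_OPT_maxmin a x /\ is_OPT2 a y /\ x = y / 2%:R.
Proof.
have [w0 _] : exists w : V, True by case: a_edge => u _; exists u.
have [C0 HC0] : exists C0 : {set V}, forall C, modC a C <= modC a C0.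
  case: (@arg_maxP _ R {set V} setT predT (modC a)) => // C0 _ H.
  by exists C0 => C; apply: H.
have M0 : 0 <= modC a C0 by rewrite -(@modT _ _ a) HC0.
have Tne : set0 \notin [set [set: V]].
  rewrite in_set1 eq_sym; apply/negP => /eqP/setP/(_ w0); by rewrite in_set0 in_setT.
have [P HP [Hs Hm]] : exists2 P, clustering P && (#|P| <= 2)%N &
    (sum_mod a P = modC a C0 + modC a C0 /\ is_maxmin_val a P (modC a C0)).
  case: (boolP ((C0 == set0) || (C0 == setT))) => [H0|H0].
    have E : modC a C0 = 0.
      case/orP: H0 => /eqP ->; last exact: modT.
      by rewrite -setCT (modC_compl _ _ a_sym) modT.
    exists [set setT].
      rewrite cards1 andbT /clustering /partition Tne andbT; apply/andP; split.
        by rewrite /cover big_set1.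
      by apply/trivIsetP => A B /set1P -> /set1P ->; rewrite eqxx.
    split; first by rewrite /sum_mod big_set1 E modT addr0.
    split; first by exists setT; rewrite ?in_set1 // E modT.
    by move=> C /set1P ->; rewrite E modT.
  have N1 : C0 != ~: C0.
    apply/negP => /eqP E; case: (set_0Vmem C0) => [C00|[x Hx]].
      by move: H0; rewrite C00 eqxx.
    by move: (Hx); rewrite [in X in X -> _]E in_setC Hx.
  exists [set C0; ~: C0].
    rewrite cards2 N1 andbT /clustering /partition; apply/and3P; split.
    - by rewrite /cover big_setU1 ?in_set1 // big_set1 /= setUCr.
    - apply/trivIsetP => A B /set2P [] -> /set2P [] -> //; rewrite ?eqxx // => _; by rewrite disjoints_subset ?setCK.
    - rewrite in_set2 negb_or; apply/andP; split.
        by rewrite eq_sym; move: H0; rewrite negb_or => /andP [].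
      by rewrite eq_sym -setCT (inj_eq (@setC_inj _)) ; move: H0; rewrite negb_or => /andP [].
  split; first by rewrite /sum_mod big_setU1 ?in_set1 // big_set1 (modC_compl _ _ a_sym).
  split; first by exists C0; rewrite ?in_set2 ?eqxx.
  by move=> C /set2P [] ->; rewrite ?(modC_compl _ _ a_sym).
move/andP: (HP) => [HP1 HP2].
exists (modC a C0), (modC a C0 + modC a C0).
have Hy : modC a C0 = (modC a C0 + modC a C0) / 2%:R.
  by rewrite -mulr2n -[_ *+ 2]mulr_natr mulfK // pnatr_eq0.
split; last split => //.
- split; first by exists P.
  move=> z [Q _ [[C _ <-] _]]; exact: HC0.
- split; first by exists P.
  move=> z [Q /andP [_ HQ] <-]; rewrite /sum_mod.
  move: HQ; rewrite leq_eqVlt => /orP [/cards2P [c1 [c2 [Hne ->]]]|].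
    rewrite big_setU1 ?in_set1 //; rewrite big_set1; exact: lerD.
  rewrite ltnS leq_eqVlt => /orP [/cards1P [c1 ->]|].
    rewrite big_set1; apply: le_trans (HC0 c1) _; by rewrite lerDl.
  rewrite ltnS leqn0 => /eqP /cards0_eq ->; rewrite big_set0; exact: addr_ge0.
Qed.
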